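(* Let $E,F$ be PVMs on a finite-dimensional Hilbert space with $E\le F$, and let $\rho$ be a density operator commuting with $E$. Then $$D(\rho\|\mathcal E_F(\rho))\le\log w(E).$$
   Context: $D(\rho\|\sigma)=\mathrm{Tr}\rho(\log\rho-\log\sigma)$. For PVMs $E=\{E_i\}$, $F=\{F_j\}$, $E\le F$ means each $E_i$ is a sum of some $F_j$; $\rho$ commutes with $E$ if $\rho E_i=E_i\rho$ for all $i$; $w(E)=\sup_i\dim(\mathrm{range}\,E_i)$; $\mathcal E_F(\rho)=\sum_jF_j\rho F_j$. *)

(* Defs.v *)
From HB Require Import structures.
From mathcomp Require Import all_boot all_order all_algebra.
From mathcomp Require Import complex.
From mathcomp Require Import reals constructive_ereal exp.
From Stdlib Require Import ClassicalEpsilon.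
Set Implicit Arguments. Unset Strict Implicit. Unset Printing Implicit Defensive.
Import Order.TTheory GRing.Theory Num.Theory.
Local Open Scope ring_scope.

Section QDefs.
Variables (R : realType) (n : nat).
Local Notation C := (R[i]).
Local Notation M := ('M[C]_n).

Definition adjmx (m p : nat) (A : 'M[C]_(m, p)) : 'M[C]_(p, m) :=
  (map_mx Num.conj A)^T.

Definition hermitian (A : M) : Prop := adjmx A = A.

Definition unitary (U : M) : Prop := U *m adjmx U = 1%:M.

Definition orth_proj (P : M) : Prop := P *m P = P /\ adjmx P = P.

Definition is_PVM (I : finType) (E : I -> M) : Prop :=
  (forall i, orth_proj (E i)) /\ \sum_(i : I) E i = 1%:M.

Definition pvm_le (I J : finType) (E : I -> M) (F : J -> M) : Prop :=
  forall i, exists S : {set J}, E i = \sum_(j in S) F j.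

Definition psd (A : M) : Prop :=
  hermitian A /\ forall v : 'cV[C]_n, 0 <= (adjmx v *m A *m v) 0 0.

Definition density (rho : M) : Prop := psd rho /\ \tr rho = 1.

Definition commutes_with (I : finType) (rho : M) (E : I -> M) : Prop :=
  forall i, rho *m E i = E i *m rho.

Definition width (I : finType) (E : I -> M) : nat := \max_(i : I) \rank (E i).

Definition pinch (J : finType) (F : J -> M) (rho : M) : M :=
  \sum_(j : J) F j *m rho *m F j.

Definition spectral (A U : M) (d : 'rV[R]_n) : Prop :=
  unitary U /\ A = U *m diag_mx (map_mx (fun x : R => (x%:C)%C) d) *m adjmx U.

(* functional calculus f(A) = U diag(f(d)) U^* for a (chosen) spectral
   decomposition of A; 0 if A has none (never happens for Hermitian A). *)
Definition mxfun (f : R -> R) (A : M) : M :=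
  match excluded_middle_informative
          (exists p : M * 'rV[R]_n, spectral A p.1 p.2) with
  | left h =>
      let p := proj1_sig (constructive_indefinite_description _ h) in
      p.1 *m diag_mx (map_mx (fun x : R => ((f x)%:C)%C) p.2) *m adjmx p.1
  | right _ => 0
  end.

Definition mxlog (A : M) : M := mxfun (@ln R) A.

(* Umegaki relative entropy D(rho||sigma) = Tr rho (log rho - log sigma) if
   supp rho <= supp sigma (i.e. ker sigma <= ker rho), +oo otherwise. *)
Definition relent (rho sigma : M) : \bar R :=
  if (kermx sigma <= kermx rho)%MS
  then (complex.Re (\tr (rho *m (mxlog rho - mxlog sigma))))%:E
  else +oo%E.

End QDefs.

(* Main.v *)
Require Import Defs.
From HB Require Import structures.
From mathcomp Require Import all_boot all_order all_algebra.
From mathcomp Require Import complex.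
From mathcomp Require Import reals constructive_ereal exp.
From mathcomp Require Import sesquilinear spectral.
From mathcomp Require Import lra ring.
From Stdlib Require Import ClassicalEpsilon.
Set Implicit Arguments. Unset Strict Implicit. Unset Printing Implicit Defensive.
Import Order.TTheory GRing.Theory Num.Theory.
Local Open Scope ring_scope.

Section Scalar.
Variable R : realType.

Lemma ln_sub_le (x y : R) : 0 < x -> 0 < y -> ln x - ln y <= x / y - 1.
Proof.
move=> x0 y0.
have xy0 : 0 < x / y by rewrite divr_gt0.
have -> : ln x - ln y = ln (x / y).
  by rewrite lnM ?posrE ?invr_gt0 // lnV ?posrE.
have := @le_ln1Dx R (x / y - 1).
rewrite addrCA subrr addr0; apply.
by rewrite ltrBrDl subrr.
Qed.

Lemma sigma_term (a mu p r : R) : 0 <= a -> 0 <= mu -> 0 < p -> 0 < r ->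
  a * mu * (ln p - ln r - ln mu) <= a * p / r - a * mu.
Proof.
move=> a0 mu0 p0 r0.
have [->|mup] := eqVneq mu 0.
  rewrite !mulr0 mul0r subr0; apply: divr_ge0; last exact: ltW.
  by apply: mulr_ge0 => //; exact: ltW.
have mu_gt0 : 0 < mu by rewrite lt_def mup.
have pr0 : 0 < p / r by rewrite divr_gt0.
have -> : ln p - ln r = ln (p / r).
  by rewrite lnM ?posrE ?invr_gt0 // lnV ?posrE.
have H := ln_sub_le pr0 mu_gt0.
have amu0 : 0 <= a * mu by rewrite mulr_ge0.
apply: le_trans (ler_wpM2l amu0 H) _.
rewrite mulrBr mulr1 lerD2r.
rewrite le_eqVlt; apply/orP; left; apply/eqP.
by field; rewrite ?gt_eqF // mup.
Qed.

Lemma rho_term (b la p : R) : 0 <= b -> 0 <= la -> 0 < p ->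
  b * la * (ln la - ln p) <= b * la ^+ 2 / p - b * la.
Proof.
move=> b0 la0 p0.
have [->|lap] := eqVneq la 0.
  by rewrite !mulr0 mul0r expr0n /= mulr0 mul0r subr0.
have la_gt0 : 0 < la by rewrite lt_def lap.
have H := ln_sub_le la_gt0 p0.
have bla0 : 0 <= b * la by rewrite mulr_ge0.
apply: le_trans (ler_wpM2l bla0 H) _.
by rewrite mulrBr mulr1 expr2 !mulrA.
Qed.

Variables (I : finType) (n : nat).

Lemma scalar_main (la mu : 'I_n -> R) (a b : I -> 'I_n -> R) (r : I -> nat) (w : nat) :
  (forall k, 0 <= la k) -> (forall l, 0 <= mu l) ->
  (forall i l, 0 <= a i l) -> (forall i k, 0 <= b i k) ->
  (forall l, \sum_i a i l = 1) -> (forall k, \sum_i b i k = 1) ->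
  (forall i, \sum_l a i l = (r i)%:R) -> (forall i, (r i <= w)%N) ->
  (forall i, \sum_l a i l * mu l = \sum_k b i k * la k) ->
  \sum_k la k = 1 ->
  (forall i, \sum_k b i k * la k ^+ 2 <= (\sum_k b i k * la k) ^+ 2) ->
  \sum_k la k * ln (la k) - \sum_l mu l * ln (mu l) <= ln (w%:R).
Proof.
move=> la0 mu0 a0 b0 a1 b1 ar rw ap lasum bsq.
pose p i := \sum_k b i k * la k.
have p0 i : 0 <= p i by apply: sumr_ge0 => k _; rewrite mulr_ge0.
have psum : \sum_i p i = 1.
  rewrite /p exchange_big /= -lasum; apply: eq_bigr => k _.
  by rewrite -mulr_suml b1 mul1r.
have rhoP i : \sum_k b i k * la k * ln (la k) <= p i * ln (p i).
  have [pi0|pi_gt0] := eqVneq (p i) 0.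
    rewrite pi0 mul0r.
    have Z k : b i k * la k = 0.
      move/eqP: pi0; rewrite /p psumr_eq0 => [/allP H|k' _]; last by rewrite mulr_ge0.
      by apply/eqP; apply: H; rewrite mem_index_enum.
    by rewrite big1 // => k _; rewrite Z mul0r.
  have pg : 0 < p i by rewrite lt_def pi_gt0 p0.
  rewrite -subr_le0.
  have -> : p i * ln (p i) = \sum_k b i k * la k * ln (p i) by rewrite /p mulr_suml.
  rewrite -sumrB.
  apply: (@le_trans _ _ (\sum_k (b i k * la k ^+ 2 / p i - b i k * la k))).
    apply: ler_sum => k _; rewrite -mulrBr; exact: rho_term.
  rewrite sumrB -mulr_suml subr_le0 ler_pdivrMr // -/(p i) -expr2.
have rpos i : 0 < p i -> (0 < r i)%N.
  move=> pg; rewrite lt0n; apply/negP => /eqP ri0.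
  have Z l : a i l = 0.
    have /eqP := ar i; rewrite ri0 psumr_eq0 => [/allP H|l' _]; last exact: a0.
    by apply/eqP; apply: H; rewrite mem_index_enum.
  move: pg; rewrite /p -ap big1 ?ltxx // => l _; by rewrite Z mul0r.
have sigP i : p i * ln (p i) - p i * ln ((r i)%:R) <= \sum_l a i l * mu l * ln (mu l).
  have [pi0|pi_gt0] := eqVneq (p i) 0.
    rewrite pi0 !mul0r subrr.
    have Z l : a i l * mu l = 0.
      move/eqP: pi0; rewrite /p -ap psumr_eq0 => [/allP H|k' _]; last by rewrite mulr_ge0.
      by apply/eqP; apply: H; rewrite mem_index_enum.
    by rewrite big1 // => l _; rewrite Z mul0r.
  have pg : 0 < p i by rewrite lt_def pi_gt0 p0.
  have rg : 0 < ((r i)%:R : R) by rewrite ltr0n rpos.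
  rewrite -subr_le0 -mulrBr.
  have -> : p i * (ln (p i) - ln (r i)%:R) = \sum_l a i l * mu l * (ln (p i) - ln (r i)%:R).
    by rewrite /p -ap mulr_suml.
  rewrite -sumrB.
  apply: (@le_trans _ _ (\sum_l (a i l * p i / (r i)%:R - a i l * mu l))).
    apply: ler_sum => l _; rewrite -mulrBr; exact: sigma_term.
  rewrite sumrB subr_le0 -mulr_suml -mulr_suml ar ap -/(p i).
  rewrite le_eqVlt; apply/orP; left; apply/eqP.
  by field; rewrite gt_eqF.
have lnw i : p i * ln ((r i)%:R) <= p i * ln (w%:R).
  have [pi0|pi_gt0] := eqVneq (p i) 0; first by rewrite pi0 !mul0r.
  have pg : 0 < p i by rewrite lt_def pi_gt0 p0.
  have rg := rpos i pg.
  rewrite ler_pM2l // ler_ln ?posrE ?ltr0n ?ler_nat //.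
  exact: leq_trans rg (rw i).
have E1 : \sum_k la k * ln (la k) = \sum_i \sum_k b i k * la k * ln (la k).
  rewrite exchange_big /=; apply: eq_bigr => k _.
  by rewrite -!mulr_suml b1 mul1r.
have E2 : \sum_l mu l * ln (mu l) = \sum_i \sum_l a i l * mu l * ln (mu l).
  rewrite exchange_big /=; apply: eq_bigr => l _.
  by rewrite -!mulr_suml a1 mul1r.
rewrite E1 E2.
apply: (@le_trans _ _ (\sum_i (p i * ln (p i)) - \sum_i (p i * ln (p i) - p i * ln ((r i)%:R)))).
  by apply: lerB; apply: ler_sum => i _; [exact: rhoP | exact: sigP].
rewrite -sumrB.
apply: (@le_trans _ _ (\sum_i p i * ln (w%:R))).
  apply: ler_sum => i _; rewrite opprB addrCA subrr addr0; exact: lnw.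
by rewrite -mulr_suml psum mul1r.
Qed.
End Scalar.

Lemma tr_pid (K : fieldType) n r : (r <= n)%N -> \tr (pid_mx r : 'M[K]_n) = r%:R.
Proof.
move=> rn; rewrite /mxtrace.
under eq_bigr do rewrite mxE eqxx /=.
rewrite -(big_mkord predT (fun i => (i < r)%:R)) /=.
rewrite (big_cat_nat (leq0n r) rn) /=.
rewrite [X in _ + X](_ : _ = 0); last first.
  rewrite big_nat_cond big1 // => i /andP[/andP[ri _] _]; by rewrite ltnNge ri.
rewrite addr0 big_nat_cond (eq_bigr (fun _ => 1)); last first.
  by move=> i /andP[/andP[_ ->]].
by rewrite -big_nat_cond sumr_const_nat subn0.
Qed.

Lemma tr_idem (K : fieldType) n (P : 'M[K]_n) : P *m P = P -> \tr P = (\rank P)%:R.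
Proof.
move=> hP.
set L := col_ebase P; set Rb := row_ebase P; set Pi := (pid_mx (\rank P) : 'M[K]_n).
have eP : L *m Pi *m Rb = P by rewrite /L /Rb /Pi mulmx_ebase.
have uL : L \in unitmx := col_ebase_unit P.
have uR : Rb \in unitmx := row_ebase_unit P.
have key : Pi *m (Rb *m L) *m Pi = Pi.
  have : L *m (Pi *m (Rb *m L) *m Pi) *m Rb = L *m Pi *m Rb.
    have H : L *m Pi *m Rb *m (L *m Pi *m Rb) = L *m Pi *m Rb by rewrite eP hP.
    by move: H; rewrite !mulmxA.
  move=> /(congr1 (mulmx (invmx L))); rewrite !mulmxA mulVmx // !mul1mx.
  move=> /(congr1 (mulmx^~ (invmx Rb))); rewrite -!mulmxA !mulmxV // !mulmx1.
  by rewrite !mulmxA.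
have PiPi : Pi *m Pi = Pi by rewrite /Pi mul_pid_mx minnn (minn_idPr (rank_leq_row P)).
have -> : \tr P = \tr (Pi *m (Rb *m L) *m Pi).
  rewrite -{1}eP mxtrace_mulC -{1}PiPi !mulmxA mxtrace_mulC !mulmxA //.
rewrite key /Pi tr_pid //; exact: rank_leq_row.
Qed.

Section CS.
Variable C : numClosedFieldType.

Lemma CSineq n (x y : 'I_n -> C) :
  (\sum_u (x u)^* * y u) * (\sum_u (x u)^* * y u)^* <=
  (\sum_u (x u)^* * x u) * (\sum_u (y u)^* * y u).
Proof.
set s := \sum_u (x u)^* * x u; set t := \sum_u (x u)^* * y u.
set q := \sum_u (y u)^* * y u.
have s0 : 0 <= s by apply: sumr_ge0 => u _; rewrite mulrC mul_conjC_ge0.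
have q0 : 0 <= q by apply: sumr_ge0 => u _; rewrite mulrC mul_conjC_ge0.
have sc : s^* = s by apply: conj_Creal; apply: ger0_real.
have tc : t^* = \sum_u (y u)^* * x u.
  by rewrite rmorph_sum; apply: eq_bigr => u _; rewrite rmorphM /= conjCK mulrC.
have key : s * (s * q - t * t^*) = \sum_u (s * y u - t * x u)^* * (s * y u - t * x u).
  have E v : (s * y v - t * x v)^* * (s * y v - t * x v) =
     s * s * ((y v)^* * y v) - s * t * ((y v)^* * x v) - s * t^* * ((x v)^* * y v)
     + t * t^* * ((x v)^* * x v).
    rewrite rmorphB !rmorphM /= sc; ring.
  rewrite (eq_bigr _ (fun u _ => E u)) big_split /= !sumrB -!mulr_sumr -/s -/t -/q; rewrite -tc.
  ring.
have H0 : 0 <= s * (s * q - t * t^*).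
  by rewrite key; apply: sumr_ge0 => u _; rewrite mulrC mul_conjC_ge0.
have [s00|sn0] := eqVneq s 0.
  have x0 u : x u = 0.
    have h : (x u)^* * x u = 0.
      by apply: (psumr_eq0P _ s00) => // u' _; rewrite mulrC mul_conjC_ge0.
    by move/eqP: h; rewrite mulf_eq0 conjC_eq0 orbb => /eqP.
  have -> : t = 0 by rewrite /t big1 // => u _; rewrite x0 rmorph0 mul0r.
  by rewrite mul0r s00 mul0r.
have sp : 0 < s by rewrite lt_def sn0 s0.
by move: H0; rewrite pmulr_rge0 // subr_ge0.
Qed.

Lemma bsq_C n m (X : 'M[C]_(m, n)) (B : 'M[C]_n) (c : 'I_n -> C) :
  (forall k l, B k l = \sum_t (X t k)^* * X t l) ->
  (forall k, B k k = \sum_l B k l * B l k) ->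
  (forall k, 0 <= c k) ->
  (forall k l, B k l * c l = c k * B k l) ->
  \sum_k B k k * c k ^+ 2 <= (\sum_k B k k * c k) ^+ 2.
Proof.
move=> hB hid hc hcomm.
have herm k l : B l k = (B k l)^*.
  rewrite !hB rmorph_sum; apply: eq_bigr => t _; by rewrite rmorphM /= conjCK mulrC.
have cs k l : B k l * (B k l)^* <= B k k * B l l.
  rewrite !hB; exact: (CSineq (fun t => X t k) (fun t => X t l)).
have -> : \sum_k B k k * c k ^+ 2 = \sum_k \sum_l (B k l * (B k l)^*) * (c k * c l).
  apply: eq_bigr => k _; rewrite hid mulr_suml; apply: eq_bigr => l _.
  rewrite -herm expr2 -mulrA [B l k * _]mulrC !mulrA -[B k l * c k]mulrC -hcomm.
  ring.
rewrite expr2 mulr_suml; apply: ler_sum => k _; rewrite mulr_sumr.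
apply: ler_sum => l _.
rewrite (_ : B k k * c k * (B l l * c l) = B k k * B l l * (c k * c l)); last by ring.
apply: ler_wpM2r; first by rewrite mulr_ge0.
exact: cs.
Qed.

End CS.

Section Mx.
Local Open Scope sesquilinear_scope.
Variable R : realType.
Local Notation C := (R[i]).
Local Notation herm := Defs.hermitian.

Lemma adjE m p (A : 'M[C]_(m,p)) i j : adjmx A i j = (A j i)^*.
Proof. by rewrite !mxE. Qed.

Lemma adjmxK m p (A : 'M[C]_(m,p)) : adjmx (adjmx A) = A.
Proof. by apply/matrixP => i j; rewrite !adjE conjCK. Qed.

Lemma adjmxM m p q (A : 'M[C]_(m,p)) (B : 'M[C]_(p,q)) :
  adjmx (A *m B) = adjmx B *m adjmx A.
Proof. by rewrite /adjmx map_mxM trmx_mul. Qed.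

Lemma adjmxD m p (A B : 'M[C]_(m,p)) : adjmx (A + B) = adjmx A + adjmx B.
Proof. by apply/matrixP => i j; rewrite !mxE rmorphD. Qed.

Lemma adjmxN m p (A : 'M[C]_(m,p)) : adjmx (- A) = - adjmx A.
Proof. by apply/matrixP => i j; rewrite !mxE rmorphN. Qed.

Lemma adjmx_sum m p (I : finType) (A : I -> 'M[C]_(m,p)) :
  adjmx (\sum_i A i) = \sum_i adjmx (A i).
Proof.
by apply/matrixP => i j; rewrite adjE !summxE rmorph_sum; apply: eq_bigr => k _; rewrite adjE.
Qed.

Lemma adjmx1 n : adjmx (1%:M : 'M[C]_n) = 1%:M.
Proof. by apply/matrixP => i j; rewrite !mxE rmorph_nat eq_sym. Qed.

Definition Dg n (d : 'rV[R]_n) : 'M[C]_n := diag_mx (map_mx (fun x : R => (x%:C)%C) d).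

Lemma conj_real (x : R) : (x%:C)%C^* = (x%:C)%C.
Proof. exact: conjc_real. Qed.

Lemma adjmx_diag n (f : R -> R) (d : 'rV[R]_n) :
  adjmx (diag_mx (map_mx (fun x : R => ((f x)%:C)%C) d)) =
  diag_mx (map_mx (fun x : R => ((f x)%:C)%C) d).
Proof.
apply/matrixP => i j; rewrite !mxE rmorphMn.
have [->|ne] := eqVneq i j; first by rewrite !mulr1n; exact: conjc_real.
by rewrite !mulr0n.
Qed.


Lemma adj_tC n (A : 'M[C]_n) : adjmx A = (A ^t Num.conj)%sesqui.
Proof. by rewrite /adjmx map_trmx. Qed.

Lemma spectral_exists n (A : 'M[C]_n) : herm A ->
  exists p : 'M[C]_n * 'rV[R]_n, spectral A p.1 p.2.
Proof.
move=> hA.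
have Hh : A \is hermsymmx.
  by apply/is_hermitianmxP; rewrite expr0 scale1r -adj_tC hA.
have /hermitian_normalmx /orthomx_spectralP Aeq := Hh.
have Pu := spectral_unitarymx A.
have real := hermitian_spectral_diag_real Hh.
have PP : spectralmx A *m adjmx (spectralmx A) = 1%:M.
  by rewrite adj_tC; apply/unitarymxP.
have Pu' : spectralmx A \in unitmx := (mulmx1_unit PP).1.
have Hinv : invmx (spectralmx A) = adjmx (spectralmx A).
  by rewrite -[invmx _]mulmx1 -PP mulmxA mulVmx // mul1mx.
exists (adjmx (spectralmx A), map_mx (@complex.Re R) (spectral_diag A)); split => /=.
  by rewrite /unitary adjmxK; apply: mulmx1C.
rewrite adjmxK {1}Aeq Hinv; congr (_ *m _ *m _).
congr diag_mx; apply/matrixP => i j; rewrite !mxE.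
by rewrite RRe_real //; move/mxOverP: real; apply.
Qed.

Lemma spec_facts n (A U : 'M[C]_n) d : spectral A U d ->
  [/\ adjmx U *m U = 1%:M, U *m adjmx U = 1%:M & adjmx U *m A *m U = Dg d].
Proof.
move=> [hU ->]; have hU' := mulmx1C hU; split => //.
by rewrite !mulmxA hU' mul1mx -mulmxA hU' mulmx1.
Qed.

Lemma mxfun_spec n (f : R -> R) (A : 'M[C]_n) : herm A ->
  exists U d, spectral A U d /\
    mxfun f A = U *m diag_mx (map_mx (fun x : R => ((f x)%:C)%C) d) *m adjmx U.
Proof.
move=> hA; rewrite /mxfun; case: excluded_middle_informative => [h|h].
  case: constructive_indefinite_description => [[U d] /= Hs].
  by exists U, d.
by exfalso; apply: h; apply: spectral_exists.
Qed.

Lemma tr_conj_diag n (A W : 'M[C]_n) (c : 'rV[C]_n) :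
  \tr (A *m (W *m diag_mx c *m adjmx W)) = \sum_l (adjmx W *m A *m W) l l * c 0 l.
Proof.
rewrite !mulmxA mxtrace_mulC !mulmxA /mxtrace; apply: eq_bigr => l _.
by rewrite mul_mx_diag mxE.
Qed.

Lemma adj_self_entry m n (X : 'M[C]_(m, n)) l :
  (adjmx X *m X) l l = \sum_t (X t l)^* * X t l.
Proof. by rewrite mxE; apply: eq_bigr => t _; rewrite adjE. Qed.

Lemma adj_self_ge0 m n (X : 'M[C]_(m, n)) l : 0 <= (adjmx X *m X) l l.
Proof.
rewrite adj_self_entry; apply: sumr_ge0 => t _.
by rewrite mulrC mul_conjC_ge0.
Qed.

Lemma tr_adj_self_ge0 m n (X : 'M[C]_(m, n)) : 0 <= \tr (adjmx X *m X).
Proof. by apply: sumr_ge0 => l _; apply: adj_self_ge0. Qed.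

Lemma tr_adj_self_eq0 m n (X : 'M[C]_(m, n)) : \tr (adjmx X *m X) = 0 -> X = 0.
Proof.
move=> h; apply/matrixP => t l; rewrite mxE.
have h1 : (adjmx X *m X) l l = 0.
  by apply: (psumr_eq0P _ h) => // l' _; exact: adj_self_ge0.
move: h1; rewrite adj_self_entry => h2.
have h3 : (X t l)^* * X t l = 0.
  by apply: (psumr_eq0P _ h2) => // t' _; rewrite mulrC mul_conjC_ge0.
by move/eqP: h3; rewrite mulf_eq0 conjC_eq0 orbb => /eqP.
Qed.

Lemma psd_diag n (A : 'M[C]_n) m (W : 'M[C]_(n, m)) l :
  psd A -> 0 <= (adjmx W *m A *m W) l l.
Proof.
move=> [_ hA]; have := hA (col l W).
have -> : (adjmx (col l W) *m A *m col l W) 0 0 = (adjmx W *m A *m W) l l.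
  rewrite !mxE; apply: eq_bigr => a _; rewrite !mxE; congr (_ * _).
  by apply: eq_bigr => b _; rewrite !mxE.
by [].
Qed.

Section PVM.
Variables (n : nat) (I : finType) (E : I -> 'M[C]_n).
Hypothesis hE : is_PVM E.

Lemma pvm_herm i : adjmx (E i) = E i.
Proof. by case: hE => h _; case: (h i). Qed.

Lemma pvm_idem i : E i *m E i = E i.
Proof. by case: hE => h _; case: (h i). Qed.

Lemma pvm_sum : \sum_i E i = 1%:M.
Proof. by case: hE. Qed.

Lemma pvm_orth i j : i != j -> E i *m E j = 0.
Proof.
move=> ij.
have S : \sum_k (E j *m E k *m E j) = E j.
  by rewrite -mulmx_suml -mulmx_sumr pvm_sum mulmx1 pvm_idem.
rewrite (bigD1 j) //= pvm_idem pvm_idem in S.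
have {}S : \sum_(k | k != j) (E j *m E k *m E j) = 0.
  by apply: (addrI (E j)); rewrite addr0.
have T k : E j *m E k *m E j = adjmx (E k *m E j) *m (E k *m E j).
  by rewrite adjmxM !pvm_herm mulmxA -[E j *m E k *m E k]mulmxA pvm_idem.
have S2 : \sum_(k | k != j) \tr (adjmx (E k *m E j) *m (E k *m E j)) = 0.
  by rewrite -raddf_sum (eq_bigr _ (fun k _ => esym (T k))) S raddf0.
apply: tr_adj_self_eq0.
by apply: (psumr_eq0P _ S2) => // k _; apply: tr_adj_self_ge0.
Qed.

Lemma pvm_mul i j : E i *m E j = if i == j then E i else 0.
Proof.
by case: eqVneq => [->|ij]; [apply: pvm_idem | apply: pvm_orth].
Qed.

End PVM.

Lemma sum_ifeq (I : finType) m p (f : I -> 'M[C]_(m, p)) j :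
  \sum_k (if k == j then f k else 0) = f j.
Proof. by rewrite -big_mkcond big_pred1_eq. Qed.

Section Pinch.
Variables (n : nat) (J : finType) (F : J -> 'M[C]_n).
Hypothesis hF : is_PVM F.

Lemma pinch_comm rho j : pinch F rho *m F j = F j *m pinch F rho.
Proof.
rewrite /pinch mulmx_suml mulmx_sumr.
have -> : \sum_k F k *m rho *m F k *m F j = \sum_k (if k == j then F k *m rho *m F k else 0).
  apply: eq_bigr => k _; rewrite -mulmxA pvm_mul //.
  by case: eqVneq => _; rewrite ?mulmx0.
have -> : \sum_k F j *m (F k *m rho *m F k) = \sum_k (if k == j then F k *m rho *m F k else 0).
  apply: eq_bigr => k _; rewrite !mulmxA pvm_mul // eq_sym.
  by case: eqVneq => [->|_]; rewrite ?mul0mx.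
by [].
Qed.

Lemma tr_pinch rho X : (forall j, X *m F j = F j *m X) ->
  \tr (pinch F rho *m X) = \tr (rho *m X).
Proof.
move=> hX; rewrite /pinch mulmx_suml raddf_sum.
have -> : \sum_j \tr (F j *m rho *m F j *m X) = \sum_j \tr (rho *m X *m F j).
  apply: eq_bigr => j _.
  rewrite -!mulmxA mxtrace_mulC -!mulmxA hX.
  by rewrite !mulmxA -[_ *m F j *m F j]mulmxA pvm_idem.
by rewrite -raddf_sum -mulmx_sumr pvm_sum // mulmx1.
Qed.

Lemma pinch_herm rho : adjmx rho = rho -> adjmx (pinch F rho) = pinch F rho.
Proof.
move=> h; rewrite /pinch adjmx_sum; apply: eq_bigr => j _.
by rewrite !adjmxM pvm_herm // h mulmxA.
Qed.

End Pinch.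

Lemma le_comm n (I J : finType) (E : I -> 'M[C]_n) (F : J -> 'M[C]_n) :
  is_PVM E -> is_PVM F -> pvm_le E F -> forall i j, E i *m F j = F j *m E i.
Proof.
move=> hE hF hle i j; have [S ->] := hle i.
rewrite mulmx_suml mulmx_sumr; apply: eq_bigr => k _.
rewrite !pvm_mul // eq_sym.
by case: eqVneq => [->|].
Qed.

Lemma comm_conj n (W X Y : 'M[C]_n) : W *m adjmx W = 1%:M -> X *m Y = Y *m X ->
  (adjmx W *m X *m W) *m (adjmx W *m Y *m W) = (adjmx W *m Y *m W) *m (adjmx W *m X *m W).
Proof.
move=> hW hXY.
have K A B : (adjmx W *m A *m W) *m (adjmx W *m B *m W) = adjmx W *m (A *m B) *m W.
  by rewrite !mulmxA -[adjmx W *m A *m W *m adjmx W]mulmxA hW mulmx1.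
by rewrite !K hXY.
Qed.

Lemma comm_diag_entry n (G : 'M[C]_n) d :
  G *m diag_mx d = diag_mx d *m G -> forall k l, G k l * d 0 l = d 0 k * G k l.
Proof.
move=> h k l; move/matrixP: h => /(_ k l).
by rewrite mul_mx_diag mul_diag_mx !mxE.
Qed.

Lemma comm_diag_f n (G : 'M[C]_n) (d : 'rV[R]_n) (f : R -> R) :
  (forall k l, G k l * (d 0 l)%:C%C = (d 0 k)%:C%C * G k l) ->
  G *m diag_mx (map_mx (fun x : R => ((f x)%:C)%C) d) =
  diag_mx (map_mx (fun x : R => ((f x)%:C)%C) d) *m G.
Proof.
move=> h; apply/matrixP => k l; rewrite mul_mx_diag mul_diag_mx !mxE.
have [->|nz] := eqVneq (G k l) 0; first by rewrite mulr0 mul0r.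
have := h k l; rewrite mulrC => /(mulIf nz) /complexI ->.
by rewrite mulrC.
Qed.

Lemma comm_fun n (A U P : 'M[C]_n) d (f : R -> R) : spectral A U d ->
  P *m A = A *m P ->
  let X := U *m diag_mx (map_mx (fun x : R => ((f x)%:C)%C) d) *m adjmx U in
  P *m X = X *m P.
Proof.
move=> hs hPA X.
have [h1 h2 h3] := spec_facts hs.
have [G hG PG] : exists2 G, G *m Dg d = Dg d *m G & P = U *m G *m adjmx U.
  exists (adjmx U *m P *m U).
    by rewrite -h3; apply: comm_conj => //; rewrite adjmxK.
  by rewrite !mulmxA h2 mul1mx -mulmxA h2 mulmx1.
rewrite /X PG.
set D := diag_mx _.
have GD : G *m D = D *m G.
  apply: comm_diag_f => k l.
  by have := comm_diag_entry hG k l; rewrite !mxE.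
rewrite !mulmxA -[U *m G *m adjmx U *m U]mulmxA h1 mulmx1.
rewrite -[U *m G *m D]mulmxA GD.
by rewrite -[U *m D *m adjmx U *m U]mulmxA h1 mulmx1 !mulmxA.
Qed.

End Mx.

Section M2.
Variable R : realType.
Local Notation C := (R[i]).
Local Notation herm := Defs.hermitian.

Lemma ReD (x y : C) : complex.Re (x + y) = complex.Re x + complex.Re y.
Proof. by case: x; case: y. Qed.

Lemma Re_sum (I : finType) (f : I -> C) : complex.Re (\sum_i f i) = \sum_i complex.Re (f i).
Proof. by apply: (big_morph (@complex.Re R) ReD). Qed.

Lemma ReMr (z : C) (x : R) : complex.Re (z * (x%:C)%C) = complex.Re z * x.
Proof. by case: z => a b /=; rewrite mulr0 subr0. Qed.

Lemma Re_nat k : complex.Re (k%:R : C) = k%:R.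
Proof. elim: k => [|k IH]; first by []. by rewrite !mulrS ReD IH. Qed.

Lemma ge0_real (z : C) : 0 <= z -> z = ((complex.Re z)%:C)%C /\ 0 <= complex.Re z.
Proof.
rewrite lecE => /andP[/eqP him hre]; split => //.
by case: z him hre => a b /= ->.
Qed.

Lemma psd_trace n m (rho U : 'M[C]_n) la (Y : 'M[C]_(m, n)) :
  spectral rho U la -> (forall k, 0 <= la 0 k) ->
  0 <= \tr (Y *m rho *m adjmx Y) /\ (\tr (Y *m rho *m adjmx Y) = 0 -> Y *m rho = 0).
Proof.
move=> hs hla; have [h1 h2 h3] := spec_facts hs.
case: hs => _ hr.
have [Z hZ] : exists Z, Z = Y *m U by exists (Y *m U).
have E1 : Y *m rho *m adjmx Y = Z *m Dg la *m adjmx Z.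
  by rewrite hZ adjmxM hr /Dg !mulmxA.
have E2 : \tr (Y *m rho *m adjmx Y) = \sum_k (adjmx Z *m Z) k k * ((la 0 k)%:C)%C.
  rewrite E1 mxtrace_mulC mulmxA /mxtrace; apply: eq_bigr => k _.
  by rewrite /Dg mul_mx_diag !mxE.
have T0 k : 0 <= (adjmx Z *m Z) k k * ((la 0 k)%:C)%C.
  by rewrite mulr_ge0 ?adj_self_ge0 // ler0c.
split; first by rewrite E2; apply: sumr_ge0 => k _.
rewrite E2 => h0.
have ZD : Z *m Dg la = 0.
  apply/matrixP => a k; rewrite /Dg mul_mx_diag !mxE.
  have hk : (adjmx Z *m Z) k k * ((la 0 k)%:C)%C = 0.
    by apply: (psumr_eq0P _ h0) => // k' _; exact: T0.
  move/eqP: hk; rewrite mulf_eq0 => /orP[hz|/eqP ->]; last by rewrite mulr0.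
  have hz' : (adjmx Z *m Z) k k = 0 by apply/eqP.
  move: hz'; rewrite adj_self_entry => hz'.
  have ha : (Z a k)^* * Z a k = 0.
    by apply: (psumr_eq0P _ hz') => // t _; rewrite mulrC mul_conjC_ge0.
  by move/eqP: ha; rewrite mulf_eq0 conjC_eq0 orbb => /eqP ->; rewrite mul0r.
by rewrite hr !mulmxA -hZ -/(Dg la) ZD mul0mx.
Qed.

End M2.

Theorem lemma10 (R : realType) (n : nat) (I J : finType)
    (E : I -> 'M[R[i]]_n) (F : J -> 'M[R[i]]_n) (rho : 'M[R[i]]_n) :
  is_PVM E -> is_PVM F -> pvm_le E F ->
  density rho -> commutes_with rho E ->
  (relent rho (pinch F rho) <= (ln ((width E)%:R : R))%:E)%E.
Proof.
move=> hE hF hle [hpsd htr] hcomm.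
have hherm : adjmx rho = rho by case: hpsd.
have hsig : adjmx (pinch F rho) = pinch F rho := pinch_herm hF hherm.
have [U [la [sU Lr]]] := mxfun_spec (@ln R) hherm.
have [V [mu [sV Ls]]] := mxfun_spec (@ln R) hsig.
have [U1 U2 U3] := spec_facts sU.
have [V1 V2 V3] := spec_facts sV.
have mapE k (d : 'rV[R]_n) : (map_mx (fun x : R => (x%:C)%C) d) 0 k = ((d 0 k)%:C)%C.
  by rewrite mxE.
have DgE k (d : 'rV[R]_n) : Dg d k k = ((d 0 k)%:C)%C.
  by rewrite /Dg !mxE eqxx mulr1n.
have la0 k : 0 <= la 0 k.
  by rewrite -ler0c -DgE -U3; apply: psd_diag.
have mu0 l : 0 <= mu 0 l.
  rewrite -ler0c -DgE -V3 /pinch mulmx_sumr mulmx_suml summxE.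
  apply: sumr_ge0 => j _.
  have -> : adjmx V *m (F j *m rho *m F j) *m V = adjmx (F j *m V) *m rho *m (F j *m V).
    by rewrite adjmxM pvm_herm // !mulmxA.
  exact: psd_diag.
have hker : (kermx (pinch F rho) <= kermx rho)%MS.
  apply/sub_kermxP.
  have [K hK] : exists K, K = kermx (pinch F rho) by eexists.
  rewrite -hK.
  have KS : K *m pinch F rho = 0 by rewrite hK mulmx_ker.
  have T j := psd_trace (K *m F j) sU la0.
  have sum0 : \sum_j \tr (K *m F j *m rho *m adjmx (K *m F j)) = 0.
    rewrite -raddf_sum.
    have -> : \sum_j (K *m F j *m rho *m adjmx (K *m F j)) = K *m pinch F rho *m adjmx K.
      rewrite /pinch mulmx_sumr mulmx_suml; apply: eq_bigr => j _.
      by rewrite adjmxM pvm_herm // !mulmxA.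
    by rewrite KS mul0mx raddf0.
  have each j : K *m F j *m rho = 0.
    apply: (T j).2; apply: (psumr_eq0P _ sum0) => // j' _; exact: (T j').1.
  rewrite -[K]mulmx1 -(pvm_sum hF) mulmx_sumr mulmx_suml big1 // => j _.
rewrite /relent hker lee_fin /mxlog Lr Ls.
have tr1 : \tr (rho *m (U *m diag_mx (map_mx (fun x : R => ((ln x)%:C)%C) la) *m adjmx U))
    = \sum_k ((la 0 k * ln (la 0 k))%:C)%C.
  by rewrite tr_conj_diag; apply: eq_bigr => k _; rewrite U3 DgE mxE rmorphM.
have Xc j : F j *m (V *m diag_mx (map_mx (fun x : R => ((ln x)%:C)%C) mu) *m adjmx V)
    = (V *m diag_mx (map_mx (fun x : R => ((ln x)%:C)%C) mu) *m adjmx V) *m F j.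
  by apply: (comm_fun _ sV); rewrite pinch_comm.
have tr2 : \tr (rho *m (V *m diag_mx (map_mx (fun x : R => ((ln x)%:C)%C) mu) *m adjmx V))
    = \sum_l ((mu 0 l * ln (mu 0 l))%:C)%C.
  rewrite -(tr_pinch hF) => [|j]; last by rewrite Xc.
  by rewrite tr_conj_diag; apply: eq_bigr => l _; rewrite V3 DgE mxE rmorphM.
rewrite mulmxBr raddfB /= tr1 tr2 -!rmorph_sum -rmorphB /=.
have Aform i (W : 'M[R[i]]_n) : adjmx W *m E i *m W = adjmx (E i *m W) *m (E i *m W).
  by rewrite adjmxM pvm_herm // !mulmxA -[adjmx W *m E i *m E i]mulmxA pvm_idem.
have Age0 i (W : 'M[R[i]]_n) l : 0 <= (adjmx W *m E i *m W) l l by rewrite Aform; apply: adj_self_ge0.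
have erho : rho = U *m Dg la *m adjmx U by case: sU.
have esig : pinch F rho = V *m Dg mu *m adjmx V by case: sV.
apply: (scalar_main (la := fun k => la 0 k) (mu := fun l => mu 0 l)
  (a := fun i l => complex.Re ((adjmx V *m E i *m V) l l))
  (b := fun i k => complex.Re ((adjmx U *m E i *m U) k k))
  (r := fun i => \rank (E i))).
- exact: la0.
- exact: mu0.
- by move=> i l; exact: (ge0_real (Age0 i V l)).2.
- by move=> i k; exact: (ge0_real (Age0 i U k)).2.
- move=> l; rewrite -Re_sum -summxE -mulmx_suml -mulmx_sumr pvm_sum // mulmx1 V1.
  by rewrite mxE eqxx.
- move=> k; rewrite -Re_sum -summxE -mulmx_suml -mulmx_sumr pvm_sum // mulmx1 U1.
  by rewrite mxE eqxx.
- move=> i; rewrite -Re_sum.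
  rewrite (_ : \sum_l _ = \tr (adjmx V *m E i *m V)) //.
  rewrite mxtrace_mulC mulmxA V2 mul1mx tr_idem ?Re_nat //.
  exact: pvm_idem.
- by move=> i; rewrite /width; exact: (leq_bigmax (F := fun i => \rank (E i))).
- move=> i.
  have h : \tr (E i *m pinch F rho) = \tr (E i *m rho).
    rewrite mxtrace_mulC [RHS]mxtrace_mulC; apply: (tr_pinch hF) => j.
    by rewrite (le_comm hE hF hle).
  rewrite esig [in RHS]erho !tr_conj_diag in h.
  have := congr1 (@complex.Re R) h; rewrite !Re_sum => h2.
  have L1 : \sum_l complex.Re ((adjmx V *m E i *m V) l l) * mu 0 l =
      \sum_l complex.Re ((adjmx V *m E i *m V) l l * (map_mx (fun x : R => (x%:C)%C) mu) 0 l).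
    by apply: eq_bigr => l _; rewrite mapE; case: ((adjmx V *m E i *m V) l l) => x y /=; rewrite mulr0 subr0.
  have L2 : \sum_k complex.Re ((adjmx U *m E i *m U) k k) * la 0 k =
      \sum_k complex.Re ((adjmx U *m E i *m U) k k * (map_mx (fun x : R => (x%:C)%C) la) 0 k).
    by apply: eq_bigr => k _; rewrite mapE; case: ((adjmx U *m E i *m U) k k) => x y /=; rewrite mulr0 subr0.
  by rewrite L1 L2.
- rewrite erho mxtrace_mulC mulmxA U1 mul1mx mxtrace_diag in htr.
  have := congr1 (@complex.Re R) htr; rewrite Re_sum => h.
  apply: etrans (_ : _ = complex.Re 1) => //; rewrite -h.
  by apply: eq_bigr => k _; rewrite mapE.
- move=> i.
  have hB k l : (adjmx U *m E i *m U) k l = \sum_t ((E i *m U) t k)^* * (E i *m U) t l.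
    by rewrite Aform mxE; apply: eq_bigr => t _; rewrite adjE.
  have BB : (adjmx U *m E i *m U) *m (adjmx U *m E i *m U) = adjmx U *m E i *m U.
    by rewrite !mulmxA -[adjmx U *m E i *m U *m adjmx U]mulmxA U2 mulmx1 -[adjmx U *m E i *m E i]mulmxA pvm_idem.
  have hid k : (adjmx U *m E i *m U) k k =
      \sum_l (adjmx U *m E i *m U) k l * (adjmx U *m E i *m U) l k.
    by rewrite -{1}BB mxE.
  have hc k : 0 <= ((la 0 k)%:C)%C by rewrite ler0c.
  have hcm : (adjmx U *m E i *m U) *m Dg la = Dg la *m (adjmx U *m E i *m U).
    by rewrite -U3; apply: comm_conj => //; rewrite hcomm.
  have hcomm2 k l : (adjmx U *m E i *m U) k l * ((la 0 l)%:C)%C =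
      ((la 0 k)%:C)%C * (adjmx U *m E i *m U) k l.
    by have := comm_diag_entry hcm k l; rewrite !mxE.
  have H := bsq_C hB hid hc hcomm2.
  have eB k : (adjmx U *m E i *m U) k k = ((complex.Re ((adjmx U *m E i *m U) k k))%:C)%C.
    exact: (ge0_real (Age0 i U k)).1.
  rewrite -lecR rmorphXn !rmorph_sum.
  have e1 : \sum_k ((complex.Re ((adjmx U *m E i *m U) k k) * la 0 k ^+ 2)%:C)%C =
      \sum_k (adjmx U *m E i *m U) k k * ((la 0 k)%:C)%C ^+ 2.
    by apply: eq_bigr => k _; rewrite {2}eB rmorphM rmorphXn.
  have e2 : \sum_k ((complex.Re ((adjmx U *m E i *m U) k k) * la 0 k)%:C)%C =
      \sum_k (adjmx U *m E i *m U) k k * ((la 0 k)%:C)%C.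
    by apply: eq_bigr => k _; rewrite {2}eB rmorphM.
  by rewrite e1 e2.
Qed.
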